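(* Let $\theta\in\mathbb{R}$ with $\omega_0=\cos\theta\neq0$, $\gamma=\sin\theta$, and let $c,\kappa\in\mathbb{R}$. Let $\mathcal H_1$ be the operator on the Fock space $\mathcal F^2(\mathbb C^3)$ (defined on polynomials) given by $$\mathcal H_1=\omega_0^{-2}\Big(\sum_{i,j=1}^3B_{ij}\,\zeta_i\partial_{\zeta_j}+\sum_{i,j,k,l=1}^3V_{ijkl}\,\zeta_i\partial_{\zeta_j}\zeta_k\partial_{\zeta_l}\Big)+\kappa,$$ with coefficients as in the context. Then $\mathcal H_1^{\star}\neq\mathcal H_1$, where $\mathcal H_1^\star$ is the adjoint of $\mathcal H_1$ with respect to the Fock inner product.
   Context: $\mathcal F^2(\mathbb C^3)$ is the Hilbert space of entire functions $\psi(\zeta_1,\zeta_2,\zeta_3)$ with inner product $\langle\psi,\phi\rangle=\int_{\mathbb C^3}\psi\,\overline{\phi}\,dW(\zeta_1)dW(\zeta_2)dW(\zeta_3)$, $dW(u)=\pi^{-1}e^{-|u|^2}\,d(\mathrm{Re}\,u)\,d(\mathrm{Im}\,u)$ finite. The adjoint is characterized by $\langle\mathcal H_1\psi,K\rangle=\langle\psi,\mathcal H_1^\star K\rangle$ for the reproducing kernels $K^{[m_1,m_2,m_3]}_{\zeta_1,\zeta_2,\zeta_3}(u_1,u_2,u_3)=\prod_{j=1}^3u_j^{m_j}e^{u_j\overline{\zeta_j}}$. Nonzero coefficients: $B_{11}=c\omega_0$, $B_{22}=-c\omega_0$, $B_{33}=-2\omega_0^2c$, $B_{12}=B_{21}=ic\gamma\omega_0$;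 $V_{1111}=V_{2222}=\tfrac14$, $V_{1122}=-\tfrac12$, $V_{1212}=V_{2121}=-\tfrac{\gamma^2}{4}$, $V_{1221}=-\tfrac{\gamma^2}{2}$, $V_{3333}=\omega_0^2$, $V_{1112}=V_{1121}=V_{1211}=V_{2111}=\tfrac{i\gamma}{4}$, $V_{2212}=V_{2221}=V_{1222}=V_{2122}=-\tfrac{i\gamma}{4}$, $V_{1133}=-\omega_0$, $V_{2233}=\omega_0$, $V_{1233}=V_{2133}=-i\gamma\omega_0$; all others zero.
   Formalization: γ = sin θ is also assumed nonzero, and $\mathcal H_1^\star\neq\mathcal H_1$ means that $\langle\mathcal H_1\psi,\phi\rangle\neq\langle\psi,\mathcal H_1\phi\rangle$ for some polynomials ψ, φ. Apart from conventions, each condition added here is assumed in the paper as well or is needed for the statement above to hold. *)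

(* Defs.v *)
From mathcomp Require Import all_boot all_algebra.
From mathcomp Require Import complex.
From mathcomp Require Import reals trigo.
From mathcomp Require Import mpoly.
Import GRing.Theory Num.Theory.
Set Implicit Arguments. Unset Strict Implicit. Unset Printing Implicit Defensive.
Local Open Scope ring_scope.

(* Polynomials in zeta_1, zeta_2, zeta_3 (indices 0,1,2) with complex coefficients:
   the common dense domain of H_1 in F^2(C^3). *)
Notation poly3 R := (mpoly.mpoly 3 R[i]).

Definition zeta {R : realType} (i : 'I_3) : poly3 R := mpoly.mpolyX R[i] (mpoly.mnm1 i).

Definition zd {R : realType} (i j : 'I_3) (p : poly3 R) : poly3 R :=
  zeta i * mpoly.mderiv j p.

(* Fock inner product <p,q> = \int p \bar q dW dW dW on polynomials.
   By Gaussian integration, <z^a, z^b> = delta_{ab} a_1! a_2! a_3!, so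
   <p,q> = sum_a p_a conj(q_a) a!. *)
Definition fock_ip {R : realType} (p q : poly3 R) : R[i] :=
  \sum_(m <- mpoly.msupp p)
     mpoly.mcoeff m p * conjc (mpoly.mcoeff m q)
       * ((\prod_(k < 3) (mpoly.fun_of_multinom m k)`!)%N)%:R.

Section Coefs.
Variables (R : realType) (theta c : R).
Local Notation w0 := ((cos theta)%:C%C : R[i]).
Local Notation g := ((sin theta)%:C%C : R[i]).
Local Notation cc := (c%:C%C : R[i]).
Local Notation I := ('i%C : R[i]).

Definition Bcoef (i j : 'I_3) : R[i] :=
  match nat_of_ord i, nat_of_ord j with
  | 0, 0 => cc * w0
  | 1, 1 => - (cc * w0)
  | 2, 2 => - (2%:R * w0 ^+ 2 * cc)
  | 0, 1 | 1, 0 => I * cc * g * w0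
  | _, _ => 0
  end.

Definition Vcoef (i j k l : 'I_3) : R[i] :=
  match nat_of_ord i, nat_of_ord j, nat_of_ord k, nat_of_ord l with
  | 0, 0, 0, 0 | 1, 1, 1, 1 => 1 / 4%:R
  | 0, 0, 1, 1 => - (1 / 2%:R)
  | 0, 1, 0, 1 | 1, 0, 1, 0 => - (g ^+ 2 / 4%:R)
  | 0, 1, 1, 0 => - (g ^+ 2 / 2%:R)
  | 2, 2, 2, 2 => w0 ^+ 2
  | 0, 0, 0, 1 | 0, 0, 1, 0 | 0, 1, 0, 0 | 1, 0, 0, 0 => I * g / 4%:R
  | 1, 1, 0, 1 | 1, 1, 1, 0 | 0, 1, 1, 1 | 1, 0, 1, 1 => - (I * g / 4%:R)
  | 0, 0, 2, 2 => - w0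
  | 1, 1, 2, 2 => w0
  | 0, 1, 2, 2 | 1, 0, 2, 2 => - (I * g * w0)
  | _, _, _, _ => 0
  end.
End Coefs.

Definition H1 {R : realType} (theta c kappa : R) (p : poly3 R) : poly3 R :=
  ((cos theta) ^- 2)%:C%C *:
    (\sum_(i < 3) \sum_(j < 3) Bcoef theta c i j *: zd i j p
     + \sum_(i < 3) \sum_(j < 3) \sum_(k < 3) \sum_(l < 3)
         Vcoef theta i j k l *: zd i j (zd k l p))
  + (kappa%:C)%C *: p.

(* T^* = T (for an operator on polynomials, with adjoint taken w.r.t. the Fock
   inner product) means <T p, q> = <p, T q> for all polynomials p, q. *)
Definition fock_selfadjoint {R : realType} (T : poly3 R -> poly3 R) : Prop :=
  forall p q : poly3 R, fock_ip (T p) q = fock_ip p (T q).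

(* Main.v *)
Require Import Defs.
From mathcomp Require Import all_boot all_algebra.
From mathcomp Require Import complex.
From mathcomp Require Import reals trigo.
From mathcomp Require Import mpoly.
From mathcomp Require Import ring.
Import GRing.Theory Num.Theory.

Local Open Scope ring_scope.

Notation o0 := (@Ordinal 3 0 isT).
Notation o1 := (@Ordinal 3 1 isT).
Notation o2 := (@Ordinal 3 2 isT).

Lemma sum3 (V : zmodType) (F : 'I_3 -> V) : \sum_(i < 3) F i = F o0 + F o1 + F o2.
Proof.
rewrite !big_ord_recl big_ord0 addr0 addrA.
by congr (_ + _ + _); congr F; apply/val_inj.
Qed.

Definition mono (f : 'I_3 -> nat) : 'X_{1..3} := [multinom f i | i < 3].

Definition Eq3 (f g : 'I_3 -> nat) : nat := [&& f o0 == g o0, f o1 == g o1 & f o2 == g o2].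

Lemma mono_eq f g : (mono f == mono g) = [&& f o0 == g o0, f o1 == g o1 & f o2 == g o2].
Proof.
apply/eqP/and3P.
  by move=> /mnmP h; rewrite /mono in h; split; apply/eqP; move: (h o0) (h o1) (h o2); rewrite !mnmE.
case=> /eqP h0 /eqP h1 /eqP h2; apply/mnmP => k; rewrite !mnmE.
case: k => [[|[|[|]]] p] //.
- by rewrite (_ : Ordinal p = o0) //; apply/val_inj.
- by rewrite (_ : Ordinal p = o1) //; apply/val_inj.
- by rewrite (_ : Ordinal p = o2) //; apply/val_inj.
Qed.


Lemma mcoeff_mono {R : realType} (f g : 'I_3 -> nat) :
  mcoeff (mono g) (mpolyX R[i] (mono f)) = (Eq3 f g)%:R.
Proof. by rewrite mcoeffX mono_eq. Qed.

Definition shift (i j : 'I_3) (f : 'I_3 -> nat) : 'I_3 -> nat :=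
  fun k => ((i == k) + (f k - (j == k)))%N.

Lemma zd_mono {R : realType} (i j : 'I_3) f :
  zd i j (mpolyX R[i] (mono f)) = (f j)%:R *: mpolyX R[i] (mono (shift i j f)).
Proof.
rewrite /zd /zeta mderivX mnmE -scalerAr -mpolyXD; congr (_ *: mpolyX _ _).
apply/mnmP => k; rewrite mnmDE mnmBE !mnmE.
by [].
Qed.

Lemma zdZ {R : realType} (i j : 'I_3) (a : R[i]) p : zd i j (a *: p) = a *: zd i j p.
Proof. by rewrite /zd mderivZ scalerAr. Qed.

Definition fct (g : 'I_3 -> nat) : nat := ((g o0)`! * (g o1)`! * (g o2)`!)%N.

Lemma prod_mono {R : realType} g : (\prod_(k < 3) (fun_of_multinom (mono g) k)`!)%N = fct g.
Proof.
rewrite !big_ord_recl big_ord0 muln1 !mnmE /fct mulnA.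
have -> : lift ord0 (@ord0 1) = o1 by apply/val_inj.
have -> : lift ord0 (lift ord0 (@ord0 0)) = o2 by apply/val_inj.
by have -> : (@ord0 2) = o0 by apply/val_inj.
Qed.

Lemma fock_X_r {R : realType} (p : poly3 R) g :
  fock_ip p (mpolyX R[i] (mono g)) = mcoeff (mono g) p * (fct g)%:R.
Proof.
rewrite /fock_ip.
have E : forall m, m \in msupp p -> m != mono g ->
   mcoeff m p * conjc (mcoeff m (mpolyX R[i] (mono g))) *
   ((\prod_(k < 3) (fun_of_multinom m k)`!)%N)%:R = 0.
  by move=> m _ /negPf h; rewrite mcoeffX eq_sym h conjc0 mulr0 mul0r.
case: (boolP (mono g \in msupp p)) => hin.
  rewrite (big_rem _ hin) /= [X in _ + X]big1_seq ?addr0.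
    by rewrite mcoeffX eqxx conjc1 mulr1 prod_mono.
  move=> m /andP[_ hm]; apply: E; first by apply: (mem_rem hm).
  by apply: contraTneq hm => ->; rewrite mem_rem_uniq ?msupp_uniq // inE eqxx.
rewrite [LHS]big1_seq.
  by move: hin; rewrite mcoeff_msupp negbK => /eqP ->; rewrite mul0r.
move=> m /andP[_ hm]; apply: E => //; by apply: contraTneq hm => ->.
Qed.

Lemma fock_X_l {R : realType} (q : poly3 R) f :
  fock_ip (mpolyX R[i] (mono f)) q = conjc (mcoeff (mono f) q) * (fct f)%:R.
Proof.
by rewrite /fock_ip msuppX big_seq1 mcoeffX eqxx mul1r prod_mono.
Qed.

Lemma mcs {R : realType} (m : 'X_{1..3}) (F : 'I_3 -> poly3 R) :
  mcoeff m (\sum_(i < 3) F i) = \sum_(i < 3) mcoeff m (F i).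
Proof. exact: raddf_sum. Qed.

Lemma mcZ {R : realType} (m : 'X_{1..3}) (a : R[i]) (p : poly3 R) : mcoeff m (a *: p) = a * mcoeff m p.
Proof. exact: mcoeffZ. Qed.

Lemma mcD {R : realType} (m : 'X_{1..3}) (p q : poly3 R) : mcoeff m (p + q) = mcoeff m p + mcoeff m q.
Proof. exact: mcoeffD. Qed.

Lemma coefH {R : realType} (theta c kappa : R) f g :
  mcoeff (mono g) (H1 theta c kappa (mpolyX R[i] (mono f))) =
  ((cos theta) ^- 2)%:C%C *
   (\sum_(i < 3) \sum_(j < 3) Bcoef theta c i j * (f j * Eq3 (shift i j f) g)%N%:R
    + \sum_(i < 3) \sum_(j < 3) \sum_(k < 3) \sum_(l < 3)
        Vcoef theta i j k l * (f l * shift k l f j * Eq3 (shift i j (shift k l f)) g)%N%:R)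
  + (kappa%:C)%C * (Eq3 f g)%:R.
Proof.
rewrite /H1 mcD !mcZ mcD mcoeff_mono.
congr (_ * (_ + _) + _); rewrite mcs.
  apply: eq_bigr => i _; rewrite mcs; apply: eq_bigr => j _.
  by rewrite mcZ zd_mono mcZ mcoeff_mono natrM mulrA.
apply: eq_bigr => i _; rewrite mcs; apply: eq_bigr => j _.
rewrite mcs; apply: eq_bigr => k _.
rewrite mcs; apply: eq_bigr => l _.
by rewrite mcZ zd_mono zdZ zd_mono !mcZ mcoeff_mono !natrM !mulrA.
Qed.

Ltac crunch h :=
  repeat match type of h with
  | context [muln ?a ?b] => let v := eval vm_compute in (muln a b) in change (muln a b) with v in h
  | context [Eq3 ?a ?b] => let v := eval vm_compute in (Eq3 a b) in change (Eq3 a b) with v in h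
  | context [fct ?a] => let v := eval vm_compute in (fct a) in change (fct a) with v in h
  end.

Lemma cjD {R : realType} (x y : R[i]) : (x + y)^*%C = x^*%C + y^*%C. Proof. exact: rmorphD. Qed.
Lemma cjN {R : realType} (x : R[i]) : (- x)^*%C = - x^*%C. Proof. exact: rmorphN. Qed.
Lemma cjM {R : realType} (x y : R[i]) : (x * y)^*%C = x^*%C * y^*%C. Proof. exact: rmorphM. Qed.
Lemma cjV {R : realType} (x : R[i]) : (x^-1)^*%C = (x^*%C)^-1. Proof. exact: fmorphV. Qed.

Theorem proposition1 (R : realType) (theta c kappa : R) :
  cos theta != 0 -> sin theta != 0 ->
  ~ fock_selfadjoint (H1 theta c kappa).
Proof.
move=> hc hs hsa.
pose fA := fun k : 'I_3 => nth 0%N [:: 2; 0; 0]%N k.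
pose fB := fun k : 'I_3 => nth 0%N [:: 0; 2; 0]%N k.
pose fM := fun k : 'I_3 => nth 0%N [:: 1; 1; 0]%N k.
have h1 := hsa (mpolyX R[i] (mono fA)) (mpolyX R[i] (mono fM)).
have h2 := hsa (mpolyX R[i] (mono fB)) (mpolyX R[i] (mono fM)).
rewrite fock_X_r fock_X_l !coefH !sum3 in h1.
rewrite fock_X_r fock_X_l !coefH !sum3 in h2.
rewrite /fA /fB /fM in h1 h2.
crunch h1. crunch h2.
rewrite /Vcoef /Bcoef in h1 h2; cbv beta iota delta [nat_of_ord] in h1, h2.
rewrite !(mulr0, mul0r, addr0, add0r, mulr1) in h1 h2.
have conjI : ('i%C : R[i])^*%C = - 'i%C.
  by apply/eqP; rewrite eq_complex /= oppr0 !eqxx.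
rewrite !(cjD, cjN, cjM, cjV, conjc_real, conjc_nat, conjI) in h1 h2.
have c1 : ((1 : R)%:C)%C = 1 :> R[i] by [].
rewrite !c1 in h1 h2.
have := congr2 (fun a b => a - b) h1 h2.
move/eqP; rewrite -subr_eq0 => /eqP H.
have nC : forall x : R, x != 0 -> (x%:C)%C != 0 :> R[i].
  by move=> x hx; apply/eqP; case => /eqP; rewrite (negPf hx).
have nI : ('i%C : R[i]) != 0 by apply/eqP; case => /eqP; rewrite oner_eq0.
have n4 : (4 : R[i]) != 0 by rewrite pnatr_eq0.
rewrite (_ : _ - _ = 4 * ((cos theta ^- 2)%:C%C * ('i%C * (sin theta)%:C%C))) in H; last first.
  by field; exact: (nC _ hc).
move/eqP: H; rewrite !mulf_eq0 (negPf n4) (negPf nI) (negPf (nC _ hs)) /=.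
rewrite (negPf (nC _ _)) //.
by rewrite invr_eq0 expf_eq0 (negPf hc) andbF.
Qed.
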